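(* Let $\pi$ be a projective plane of order $q$, and let $n,s,t\in\mathbb{N}$ be such that $q=(n+1)^2$ and $q\ge s,t>q-n$. Then, for $s\ne t$, \[ n_\pi(K_{s,t})=2\binom{q^2+q+1}{2}\binom{q}{s}\binom{q}{t}, \] and \[ n_\pi(K_{s,s})=\binom{q^2+q+1}{2}\binom{q}{s}^2. \]
   Context: $K_{s,t}$ is the complete bipartite graph with classes of sizes $s,t$. A finite projective plane of order $q$ has $q^2+q+1$ points and lines, $q+1$ points on each line and $q+1$ lines through each point; any two distinct points lie on a unique line and any two lines meet in a unique point. An embedding of a simple graph $G=(V,E)$ into $\pi$ is an injective map $\phi$ from $V$ to the points of $\pi$ such that the induced map sending an edge $ab$ to the line through $\phi(a),\phi(b)$ is injective on $E$. Two embeddings $\phi,\psi$ are equivalent if $\psi=\phi\circ\alpha$ for some graph automorphism $\alpha$ of $G$; $n_\pi(G)$ is the number of equivalence classes (equivalently, the number of distinct images of $G$ in $\pi$). *)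

(* Defs.v *)
From mathcomp Require Import all_boot all_order all_fingroup.
Set Implicit Arguments. Unset Strict Implicit. Unset Printing Implicit Defensive.

Section Defs.
Variables (P L : finType) (inc : P -> L -> bool).

Definition is_proj_plane (q : nat) : Prop :=
  [/\ #|P| = q ^ 2 + q + 1 /\ #|L| = q ^ 2 + q + 1,
      (forall l : L, #|[set p : P | inc p l]| = q.+1),
      (forall p : P, #|[set l : L | inc p l]| = q.+1),
      (forall p1 p2 : P, p1 != p2 -> exists! l : L, inc p1 l && inc p2 l) &
      (forall l1 l2 : L, l1 != l2 -> exists! p : P, inc p l1 && inc p l2)].

Definition lineof (a b : P) : option L := [pick l | inc a l && inc b l].

Variables (V : finType) (e : rel V).

(* embedding: injective on vertices, and the induced edge -> line map
   (edges being unordered pairs {x,y} with e x y) is injective *)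
Definition embedding (phi : {ffun V -> P}) : bool :=
  injectiveb phi &&
  [forall x, forall y, forall u, forall v,
     [&& e x y, e u v & lineof (phi x) (phi y) == lineof (phi u) (phi v)] ==>
     (((x == u) && (y == v)) || ((x == v) && (y == u)))].

Definition graph_aut (a : {perm V}) : bool :=
  [forall x, forall y, e (a x) (a y) == e x y].

Definition emb_class (phi : {ffun V -> P}) : {set {ffun V -> P}} :=
  [set psi : {ffun V -> P} |
     [exists a : {perm V}, graph_aut a && (psi == [ffun x => phi (a x)])]].

Definition n_pi : nat :=
  #|[set emb_class phi | phi in [set phi : {ffun V -> P} | embedding phi]]|.

End Defs.

Definition Kst (s t : nat) : rel ('I_s + 'I_t)%type :=
  fun x y => match x, y with
             | inl _, inr _ | inr _, inl _ => true
             | _, _ => false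
             end.
Arguments Kst s t : clear implicits.

(* Main.v *)
Require Import Defs.
From mathcomp Require Import all_boot all_order all_fingroup.
From mathcomp Require Import zify.
Set Implicit Arguments. Unset Strict Implicit. Unset Printing Implicit Defensive.

Section Plane.
Variables (P L : finType) (inc : P -> L -> bool) (q : nat).
Hypothesis pp : is_proj_plane inc q.

Definition pts (l : L) := [set p : P | inc p l].

Lemma line_uniq a b l l' : a != b -> inc a l -> inc b l -> inc a l' -> inc b l' -> l = l'.
Proof.
case: pp => _ _ _ H _ ab al bl al' bl'.
have [l1 [_ U]] := H a b ab.
by rewrite -(U l) ?al ?bl // -(U l') ?al' ?bl'.
Qed.

Lemma pt_uniq l l' a b : l != l' -> inc a l -> inc a l' -> inc b l -> inc b l' -> a = b.
Proof.
case: pp => _ _ _ _ H ll al al' bl bl'.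
have [p1 [_ U]] := H l l' ll.
by rewrite -(U a) ?al ?al' // -(U b) ?bl ?bl'.
Qed.

Lemma card_pts l : #|pts l| = q.+1.
Proof. by case: pp => _ H _ _ _; apply: H. Qed.

Lemma card_through a : #|[set l | inc a l]| = q.+1.
Proof. by case: pp => _ _ H _ _; apply: H. Qed.

Lemma card_lines : #|L| = q ^ 2 + q + 1.
Proof. by case: pp => [[_ ->]]. Qed.

Lemma lineof_some a b l : lineof inc a b = Some l -> inc a l && inc b l.
Proof. rewrite /lineof; case: pickP => // l1 H [<-] //. Qed.

Lemma lineof_ex a b : a != b -> exists l, lineof inc a b = Some l.
Proof.
move=> ab; rewrite /lineof; case: pickP => [l _|H]; first by exists l.
case: pp => _ _ _ H2 _; have [l [Hl _]] := H2 a b ab.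
by rewrite H in Hl.
Qed.

Lemma lineof_eq a b l : a != b -> inc a l -> inc b l -> lineof inc a b = Some l.
Proof.
move=> ab al bl; have [l1 E] := lineof_ex ab; rewrite E.
have /andP [H1 H2] := lineof_some E; by rewrite (line_uniq ab H1 H2 al bl).
Qed.

Lemma card_diff l1 l2 : l1 != l2 -> #|pts l1 :\: pts l2| = q.
Proof.
move=> ll.
case: pp => _ _ _ _ H; have [p [Hp U]] := H l1 l2 ll.
have E : pts l1 :&: pts l2 = [set p].
  apply/setP => x; rewrite !inE; apply/idP/eqP => [Hx|->//].
  by rewrite (U x).
have := cardsID (pts l2) (pts l1); rewrite E cards1 card_pts; lia.
Qed.

Variable l0 : L.
Definition ln a b := odflt l0 (lineof inc a b).

Lemma ln_inc a b : a != b -> inc a (ln a b) && inc b (ln a b).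
Proof.
move=> ab; have [l E] := lineof_ex ab.
by rewrite /ln E /=; apply: lineof_some.
Qed.

Variable n : nat.

Lemma collinear (A B : {set P}) :
 (forall a, a \in A -> a \notin B) ->
 (forall a b b' l, a \in A -> b \in B -> b' \in B -> b != b' -> inc a l -> inc b l -> inc b' l -> False) ->
 (forall b a a' l, b \in B -> a \in A -> a' \in A -> a != a' -> inc b l -> inc a l -> inc a' l -> False) ->
 q.+1 <= #|B| + n -> n * n.-1 < #|A|.-1 ->
 exists l, A \subset pts l.
Proof.
move=> dis F2 F3 hB hA.
case: (boolP [exists l, A \subset pts l]) => [/existsP//|/existsPn Hn].
have Hoff : forall l, exists2 a', a' \in A & ~~ inc a' l.
  move=> l; have /subsetPn [a' a'A Ha'] := Hn l; exists a' => //.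
  by move: Ha'; rewrite inE.
have : 0 < #|A| by lia.
move=> /card_gt0P [a aA].
pose Sec a := [set l | inc a l & [exists a', [&& a' \in A, a' != a & inc a' l]]].
pose Mix a := [set l | inc a l & [exists b, (b \in B) && inc b l]].
have secb : forall a, a \in A -> #|Sec a| <= n.
  move=> x xA.
  have M1 : #|B| <= #|Mix x|.
    have <- : #|[set ln x b | b in B]| = #|B|.
      apply: card_in_imset => b b' bB b'B E.
      apply/eqP; apply/negPn/negP => bb.
      have xb : x != b by apply/eqP => E1; move: (dis x xA); rewrite E1 bB.
      have xb' : x != b' by apply/eqP => E1; move: (dis x xA); rewrite E1 b'B.
      have /andP [H1 H2] := ln_inc xb.
      have /andP [H3 H4] := ln_inc xb'.
      by apply: (F2 x b b' (ln x b)) => //; rewrite E.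
    apply/subset_leq_card/subsetP => l /imsetP [b bB ->].
    have xb : x != b by apply/eqP => E1; move: (dis x xA); rewrite E1 bB.
    have /andP [H1 H2] := ln_inc xb.
    rewrite inE H1 /=; apply/existsP; exists b; by rewrite bB.
  have D : Sec x :&: Mix x = set0.
    apply/setP => l; rewrite !inE.
    apply/negP => /andP [/andP [xl /existsP [a' /and3P [a'A a'x a'l]]] /andP [_ /existsP [b /andP [bB bl]]]].
    by apply: (F3 b a' x l).
  have U : #|Sec x :|: Mix x| <= q.+1.
    rewrite -(card_through x); apply/subset_leq_card/subsetP => l.
    by rewrite !inE => /orP [/andP [->]|/andP [->]].
  move: U; rewrite cardsU D cards0; lia.
have kb : forall m, #|A :&: pts m| <= n.
  move=> m; have [a' a'A a'm] := Hoff m.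
  have a'x : forall x, x \in A :&: pts m -> a' != x.
    by move=> x; rewrite !inE => /andP [_ xm]; apply/eqP => E; rewrite E xm in a'm.
  have <- : #|[set ln a' x | x in A :&: pts m]| = #|A :&: pts m|.
    apply: card_in_imset => x y xA yA E.
    apply/eqP; apply/negPn/negP => xy.
    have /andP [H1 H2] := ln_inc (a'x x xA).
    have /andP [H3 H4] := ln_inc (a'x y yA).
    move: xA yA; rewrite !inE => /andP [_ xm] /andP [_ ym].
    have Em : ln a' x = m by apply: (line_uniq xy) => //; rewrite E.
    by rewrite -Em H1 in a'm.
  apply: leq_trans (secb a' a'A).
  apply/subset_leq_card/subsetP => l /imsetP [x xA ->].
  have /andP [H1 H2] := ln_inc (a'x x xA).
  rewrite inE H1 /=; apply/existsP; exists x.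
  move: (xA) => /setIP [xA' _]; by rewrite xA' (eq_sym x) (a'x x xA) H2.
pose f x := ln a x.
have ax : forall x, x \in A :\ a -> a != x by move=> x; rewrite !inE eq_sym => /andP [].
have Hcnt : #|A :\ a| <= n * n.-1.
  rewrite -sum1_card (partition_big_imset f).
  apply: (@leq_trans (\sum_(m in [set f x | x in A :\ a]) n.-1)).
    apply: leq_sum => m /imsetP [x0 x0A ->].
    rewrite sum1dep_card.
    have /andP [H1 _] := ln_inc (ax x0 x0A).
    apply: (@leq_trans #|(A :&: pts (f x0)) :\ a|).
      apply/subset_leq_card/subsetP => x; rewrite !inE => /andP [/andP [xa xA] /eqP E].
      have xin : x \in A :\ a by rewrite !inE xa xA.
      rewrite xa xA /=; have /andP [_ ] := ln_inc (ax x xin).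
      by rewrite /f in E; rewrite E.
    have := cardsD1 a (A :&: pts (f x0)); rewrite !inE aA H1 /=.
    have := kb (f x0); lia.
  rewrite sum_nat_const.
  have : #|[set f x | x in A :\ a]| <= n.
    apply: leq_trans (secb a aA); apply/subset_leq_card/subsetP => l /imsetP [x xA ->].
    have /andP [H1 H2] := ln_inc (ax x xA).
    rewrite inE H1 /=; apply/existsP; exists x.
    move: xA; rewrite !inE => /andP [xa ->]; by rewrite xa H2.
  move=> h; exact: leq_mul.
have := cardsD1 a A; rewrite aA; lia.
Qed.

Lemma structure (A B : {set P}) :
 (forall a, a \in A -> a \notin B) ->
 (forall a b b' l, a \in A -> b \in B -> b' \in B -> b != b' -> inc a l -> inc b l -> inc b' l -> False) ->
 (forall b a a' l, b \in B -> a \in A -> a' \in A -> a != a' -> inc b l -> inc a l -> inc a' l -> False) ->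
 q.+1 <= #|B| + n -> n * n.-1 < #|A|.-1 ->
 q.+1 <= #|A| + n -> n * n.-1 < #|B|.-1 ->
 exists l1, exists l2, [&& l1 != l2, A \subset pts l1 :\: pts l2 & B \subset pts l2 :\: pts l1].
Proof.
move=> dis F2 F3 h1 h2 h3 h4.
have [l1 /subsetP A1] := collinear dis F2 F3 h1 h2.
have dis' : forall b, b \in B -> b \notin A.
  by move=> b bB; apply/negP => bA; move: (dis b bA); rewrite bB.
have [l2 /subsetP B2] := collinear dis' F3 F2 h3 h4.
have /card_gt1P [a1 [a2 [a1A a2A a12]]] : 1 < #|A| by lia.
have /card_gt1P [b1 [b2 [b1B b2B b12]]] : 1 < #|B| by lia.
have := A1 _ a1A; have := A1 _ a2A; have := B2 _ b1B; have := B2 _ b2B.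
rewrite !inE => b2l b1l a2l a1l.
exists l1, l2.
have l12 : l1 != l2.
  apply/eqP => E; subst l2; exact: (F2 a1 b1 b2 l1).
rewrite l12 /=; apply/andP; split; apply/subsetP => x xS; rewrite !inE.
- have := A1 _ xS; rewrite inE => -> ; rewrite andbT.
  apply/negP => xl; exact: (F2 x b1 b2 l2).
- have := B2 _ xS; rewrite inE => -> ; rewrite andbT.
  apply/negP => xl; exact: (F3 x a1 a2 l1).
Qed.

End Plane.

Lemma mixed_uniq (P L : finType) (inc : P -> L -> bool) q (pp : is_proj_plane inc q)
  (A B : {set P}) l1 l2 m a a' b b' :
  l1 != l2 -> A \subset pts inc l1 :\: pts inc l2 -> B \subset pts inc l2 :\: pts inc l1 ->
  a \in A -> a' \in A -> b \in B -> b' \in B ->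
  inc a m -> inc a' m -> inc b m -> inc b' m -> a = a' /\ b = b'.
Proof.
move=> l12 /subsetP HA /subsetP HB aA a'A bB b'B am a'm bm b'm.
move: (HA _ aA) (HA _ a'A) (HB _ bB) (HB _ b'B); rewrite !inE.
move=> /andP [al2 al1] /andP [a'l2 a'l1] /andP [bl1 bl2] /andP [b'l1 b'l2].
split; apply/eqP; apply/negPn/negP => ne.
- have E := line_uniq pp ne am a'm al1 a'l1; by move: bl1; rewrite -E bm.
- have E := line_uniq pp ne bm b'm bl2 b'l2; by move: al2; rewrite -E am.
Qed.

Definition isl (A B : Type) (x : A + B) : bool := if x is inl _ then true else false.

Section Graph.
Variables (P : finType) (s t : nat).
Local Notation V := ('I_s + 'I_t)%type.

Definition side (c : bool) : {set V} := [set x : V | isl x == c].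
Definition kf (phi : {ffun V -> P}) := ([set phi x | x in side true], [set phi x | x in side false]).
Definition sym (AB : {set P} * {set P}) := [set AB.1; AB.2].
Definition hf phi := sym (kf phi).

Lemma KstE (x y : V) : Kst s t x y = isl x (+) isl y.
Proof. by case: x; case: y. Qed.

Lemma card_side_true : #|side true| = s.
Proof.
have -> : side true = [set inl i | i : 'I_s].
  apply/setP => [[i|j]]; rewrite !inE /=.
  - by apply/esym/imsetP; exists i.
  - by apply/esym/negbTE/negP => /imsetP [i _].
by rewrite card_imset ?card_ord // => i j [].
Qed.

Lemma card_side_false : #|side false| = t.
Proof.
have -> : side false = [set inr i | i : 'I_t].
  apply/setP => [[i|j]]; rewrite !inE /=.
  - by apply/esym/negbTE/negP => /imsetP [j _].
  - by apply/esym/imsetP; exists j.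
by rewrite card_imset ?card_ord // => i j [].
Qed.

Lemma setpair (T : finType) (A B C D : T) :
  [set A; B] = [set C; D] -> (A = C /\ B = D) \/ (A = D /\ B = C).
Proof.
move=> E.
have : A \in [set C; D] by rewrite -E !inE eqxx.
have : B \in [set C; D] by rewrite -E !inE eqxx orbT.
have : C \in [set A; B] by rewrite E !inE eqxx.
have : D \in [set A; B] by rewrite E !inE eqxx orbT.
rewrite !inE => HD HC HB HA.
case: (eqVneq A C) => [AC|AC].
- left; split => //; subst C.
  case/orP: HB => /eqP // BA; subst B.
  by case/orP: HD => /eqP.
- right; rewrite (negbTE AC) /= in HA; move/eqP: HA => AD.
  rewrite eq_sym (negbTE AC) /= in HC; move/eqP: HC => CB.
  by split.
Qed.

Lemma aut_side (a : {perm V}) : graph_aut (Kst s t) a -> exists c, forall x, isl (a x) = c (+) isl x.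
Proof.
move=> /forallP H.
have Hxy : forall x y, isl (a x) (+) isl x = isl (a y) (+) isl y.
  move=> x y; move: (H x) => /forallP /(_ y) /eqP; rewrite !KstE.
  by case: (isl (a x)); case: (isl x); case: (isl (a y)); case: (isl y).
case: (pickP (fun _ : V => true)) => [x0 _|H0].
- exists (isl (a x0) (+) isl x0) => x; rewrite (Hxy x0 x).
  by case: (isl (a x)); case: (isl x).
- by exists false => x; have := H0 x.
Qed.

Lemma img_side (a : {perm V}) c : (forall x, isl (a x) = c (+) isl x) ->
  forall b, [set a x | x in side b] = side (c (+) b).
Proof.
move=> Hc b; apply/setP => y; rewrite [y \in side _]inE.
apply/imsetP/eqP => [[x]|Hy].
- by rewrite inE => /eqP <- ->.
- exists ((a^-1)%g y); last by rewrite permKV.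
  rewrite inE; have := Hc ((a^-1)%g y); rewrite permKV Hy; clear Hc Hy.
  by case: c; case: b; case: (isl _).
Qed.

Lemma hf_aut (phi : {ffun V -> P}) (a : {perm V}) : graph_aut (Kst s t) a ->
  hf [ffun x => phi (a x)] = hf phi.
Proof.
move=> /aut_side [c Hc].
have E : forall b, [set [ffun x => phi (a x)] x | x in side b] = [set phi x | x in side (c (+) b)].
  move=> b; rewrite -(img_side Hc) -imset_comp; apply: eq_imset => x; by rewrite ffunE.
rewrite /hf /kf /sym /= !E; clear E Hc; case: c => //=; exact: setUC.
Qed.

Lemma aut_of_hf (phi psi : {ffun V -> P}) : injective phi -> injective psi ->
  hf phi = hf psi -> exists2 a : {perm V}, graph_aut (Kst s t) a & psi = [ffun x => phi (a x)].
Proof.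
move=> iphi ipsi E.
have [c Hc] : exists c, forall b, [set psi x | x in side b] = [set phi x | x in side (c (+) b)].
  case: (setpair E) => [[E1 E2]|[E1 E2]]; [exists false|exists true]; by case.
have Hex : forall x, exists y, (isl y == (c (+) isl x)) && (phi y == psi x).
  move=> x; have : psi x \in [set psi x | x in side (isl x)] by apply: imset_f; rewrite inE.
  rewrite Hc => /imsetP [y]; rewrite inE => Hy Ey; exists y; by rewrite Hy Ey eqxx.
pose g x := odflt x [pick y | phi y == psi x].
have Hg : forall x, phi (g x) = psi x /\ isl (g x) = c (+) isl x.
  move=> x; have [y /andP [/eqP Hy /eqP Ey]] := Hex x.
  rewrite /g; case: pickP => [z /eqP Ez|H]; last by have := H y; rewrite Ey eqxx.
  have zy : z = y by apply: iphi; rewrite Ez Ey.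
  by rewrite /= zy Ey Hy.
have ginj : injective g.
  by move=> x y Exy; apply: ipsi; rewrite -(proj1 (Hg x)) -(proj1 (Hg y)) Exy.
exists (perm ginj).
- apply/forallP => x; apply/forallP => y; rewrite !KstE !permE (proj2 (Hg x)) (proj2 (Hg y)).
  by case: (c); case: (isl x); case: (isl y).
- by apply/ffunP => x; rewrite ffunE permE (proj1 (Hg x)).
Qed.

Lemma class_mem (phi psi : {ffun V -> P}) :
  reflect (exists2 a : {perm V}, graph_aut (Kst s t) a & psi = [ffun x => phi (a x)])
          (psi \in emb_class (Kst s t) phi).
Proof.
rewrite inE; apply: (iffP existsP) => [[a /andP [Ha /eqP E]]|[a Ha E]]; exists a => //.
by rewrite Ha E eqxx.
Qed.

Lemma class_sub (phi psi : {ffun V -> P}) : injective phi -> injective psi ->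
  hf phi = hf psi -> emb_class (Kst s t) phi \subset emb_class (Kst s t) psi.
Proof.
move=> iphi ipsi E; apply/subsetP => chi /class_mem [a Ha Ec].
have ichi : injective chi.
  by move=> x y; rewrite Ec !ffunE => /iphi /perm_inj.
have E2 : hf psi = hf chi by rewrite -E Ec hf_aut.
have [b Hb ->] := aut_of_hf ipsi ichi E2.
by apply/class_mem; exists b.
Qed.

Lemma aut1 : graph_aut (Kst s t) 1%g.
Proof. by apply/forallP => x; apply/forallP => y; rewrite !perm1. Qed.

Lemma class_eq (phi psi : {ffun V -> P}) : injective phi -> injective psi ->
  (emb_class (Kst s t) phi == emb_class (Kst s t) psi) = (hf phi == hf psi).
Proof.
move=> iphi ipsi; apply/eqP/eqP => E.
- have : psi \in emb_class (Kst s t) phi.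
    by rewrite E; apply/class_mem; exists 1%g; [exact: aut1| apply/ffunP => x; rewrite ffunE perm1].
  move=> /class_mem [a Ha ->]; by rewrite hf_aut.
- by apply/eqP; rewrite eqEsubset !class_sub.
Qed.

End Graph.

Lemma card_imset_equiv (T U W : finType) (f : T -> U) (g : T -> W) (E : {set T}) (d : U) :
  (forall x y, x \in E -> y \in E -> (f x == f y) = (g x == g y)) ->
  #|[set f x | x in E]| = #|[set g x | x in E]|.
Proof.
move=> H.
pose F w := if [pick x in E | g x == w] is Some x then f x else d.
have HF : forall x, x \in E -> F (g x) = f x.
  move=> x xE; rewrite /F; case: pickP => [y /andP [yE gy]|H0].
  - by apply/eqP; rewrite H.
  - by have := H0 x; rewrite xE eqxx.
have -> : [set f x | x in E] = [set F w | w in [set g x | x in E]].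
  by rewrite -imset_comp; apply: eq_in_imset => x xE /=; rewrite HF.
apply: card_in_imset => w1 w2 /imsetP [x1 x1E ->] /imsetP [x2 x2E ->].
by rewrite !HF // => /eqP; rewrite H // => /eqP.
Qed.

Section Main.
Variables (P L : finType) (inc : P -> L -> bool) (q n : nat).
Hypothesis pp : is_proj_plane inc q.
Variable l0 : L.
Variables (s t : nat).

Definition Dset : {set {set P} * {set P}} :=
  [set AB : {set P} * {set P} | [&& #|AB.1| == s, #|AB.2| == t & [exists l1, exists l2,
     [&& l1 != l2, AB.1 \subset pts inc l1 :\: pts inc l2 & AB.2 \subset pts inc l2 :\: pts inc l1]]]].

Local Notation V := ('I_s + 'I_t)%type.
Local Notation E := [set phi : {ffun V -> P} | embedding inc (Kst s t) phi].

Hypotheses (Hs1 : q.+1 <= s + n) (Ht1 : q.+1 <= t + n) (Hs2 : n * n.-1 < s.-1) (Ht2 : n * n.-1 < t.-1).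

Lemma kfE_sub : [set kf phi | phi in E] \subset Dset.
Proof.
apply/subsetP => AB /imsetP [phi]; rewrite inE => /andP [/injectiveP iphi /forallP H] ->.
have Hc : forall x y u v, Kst s t x y -> Kst s t u v ->
    lineof inc (phi x) (phi y) = lineof inc (phi u) (phi v) ->
    ((x == u) && (y == v)) || ((x == v) && (y == u)).
  move=> x y u v e1 e2 e3; move: (H x) => /forallP /(_ y) /forallP /(_ u) /forallP /(_ v) /implyP.
  by apply; rewrite e1 e2 e3 eqxx.
have neq : forall x y, isl x != isl y -> phi x != phi y.
  by move=> x y D; apply/eqP => /iphi Exy; rewrite Exy eqxx in D.
have Kxy : forall x y, isl x != isl y -> Kst s t x y.
  by move=> x y; rewrite KstE; case: (isl x); case: (isl y).
have hA : #|[set phi x | x in side s t true]| = s by rewrite card_imset // card_side_true.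
have hB : #|[set phi x | x in side s t false]| = t by rewrite card_imset // card_side_false.
rewrite /kf inE /= hA hB !eqxx /=.
have [l1 [l2 Hl]] : exists l1, exists l2, [&& l1 != l2,
   [set phi x | x in side s t true] \subset pts inc l1 :\: pts inc l2 &
   [set phi x | x in side s t false] \subset pts inc l2 :\: pts inc l1].
  apply: (structure pp l0 (n := n)); rewrite ?hA ?hB //.
  - move=> a /imsetP [x]; rewrite inE => /eqP xS ->; apply/negP => /imsetP [y].
    by rewrite inE => /eqP yS /iphi Exy; rewrite -Exy xS in yS.
  - move=> a b b' l /imsetP [x]; rewrite inE => /eqP xS -> /imsetP [y]; rewrite inE => /eqP yS ->.
    move=> /imsetP [y']; rewrite inE => /eqP y'S -> bb al bl b'l.
    have xy : isl x != isl y by rewrite xS yS.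
    have xy' : isl x != isl y' by rewrite xS y'S.
    have := Hc x y x y' (Kxy _ _ xy) (Kxy _ _ xy').
    rewrite (lineof_eq pp (neq _ _ xy) al bl) (lineof_eq pp (neq _ _ xy') al b'l) => /(_ erefl).
    rewrite eqxx /=; case/orP => [/eqP Eyy|/andP [_ /eqP Eyx]].
    + by rewrite Eyy eqxx in bb.
    + by move: xy; rewrite Eyx eqxx.
  - move=> b a a' l /imsetP [y]; rewrite inE => /eqP yS -> /imsetP [x]; rewrite inE => /eqP xS ->.
    move=> /imsetP [x']; rewrite inE => /eqP x'S -> aa bl al a'l.
    have xy : isl y != isl x by rewrite xS yS.
    have xy' : isl y != isl x' by rewrite x'S yS.
    have := Hc y x y x' (Kxy _ _ xy) (Kxy _ _ xy').
    rewrite (lineof_eq pp (neq _ _ xy) bl al) (lineof_eq pp (neq _ _ xy') bl a'l) => /(_ erefl).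
    rewrite eqxx /=; case/orP => [/eqP Eyy|/andP [_ /eqP Eyx]].
    + by rewrite Eyy eqxx in aa.
    + by move: xy; rewrite Eyx eqxx.
by apply/existsP; exists l1; apply/existsP; exists l2.
Qed.

Lemma kfE_sup : Dset \subset [set kf phi | phi in E].
Proof.
apply/subsetP => [[A B]]; rewrite inE /= => /and3P [/eqP hA /eqP hB /existsP [l1 /existsP [l2 /and3P [l12 HA HB]]]].
pose phi : {ffun V -> P} := [ffun x => match x with
   | inl i => enum_val (cast_ord (esym hA) i)
   | inr j => enum_val (cast_ord (esym hB) j) end].
have memA : forall x : V, isl x -> phi x \in A.
  by case => // i _; rewrite ffunE; apply: enum_valP.
have memB : forall x : V, ~~ isl x -> phi x \in B.
  by case => // j _; rewrite ffunE; apply: enum_valP.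
have dis : forall p : P, p \in A -> p \in B -> False.
  move=> p pA pB; move: (subsetP HA p pA) (subsetP HB p pB); rewrite !inE.
  by case/andP => /negP H1 _ /andP [_ H2].
have iphi : injective phi.
  case=> [i|j] [i'|j']; rewrite !ffunE.
  - by move/enum_val_inj/cast_ord_inj => ->.
  - move=> Ep; exfalso; apply: (dis (phi (inl i))); first exact: memA.
    by rewrite ffunE Ep; apply: enum_valP.
  - move=> Ep; exfalso; apply: (dis (phi (inl i'))); first exact: memA.
    by rewrite ffunE -Ep; apply: enum_valP.
  - by move/enum_val_inj/cast_ord_inj => ->.
have kphi : kf phi = (A, B).
  rewrite /kf; congr pair; apply/setP => p; apply/imsetP/idP.
  - by case=> x; rewrite inE => /eqP xS ->; apply: memA; rewrite xS.
  - move=> pA; exists (inl (cast_ord hA (enum_rank_in pA p))); first by rewrite inE.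
    by rewrite ffunE cast_ordK enum_rankK_in.
  - by case=> x; rewrite inE => /eqP xS ->; apply: memB; rewrite xS.
  - move=> pB; exists (inr (cast_ord hB (enum_rank_in pB p))); first by rewrite inE.
    by rewrite ffunE cast_ordK enum_rankK_in.
rewrite -kphi; apply: imset_f; rewrite inE; apply/andP; split; first exact/injectiveP.
apply/forallP => x; apply/forallP => y; apply/forallP => u; apply/forallP => v.
apply/implyP => /and3P [e1 e2 /eqP e3].
have xy : phi x != phi y.
  apply/eqP => /iphi Exy; by rewrite Exy KstE addbb in e1.
have [m Hm] := lineof_ex pp xy.
have /andP [xm ym] := lineof_some Hm.
rewrite e3 in Hm; have /andP [um vm] := lineof_some Hm.
have Q : forall x y u v : V, isl x -> ~~ isl y -> isl u -> ~~ isl v -> inc (phi x) m -> inc (phi y) m ->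
    inc (phi u) m -> inc (phi v) m -> x = u /\ y = v.
  move=> x' y' u' v' hx hy hu hv x'm y'm u'm v'm.
  have [E1 E2] := mixed_uniq pp l12 HA HB (memA _ hx) (memA _ hu) (memB _ hy) (memB _ hv) x'm u'm y'm v'm.
  by split; apply: iphi.
rewrite !KstE in e1 e2.
case Ex: (isl x) e1; case Ey: (isl y) => // _; case Eu: (isl u) e2; case Ev: (isl v) => // _.
- have [-> ->] := Q x y u v Ex (negbT Ey) Eu (negbT Ev) xm ym um vm; by rewrite !eqxx.
- have [-> ->] := Q x y v u Ex (negbT Ey) Ev (negbT Eu) xm ym vm um; by rewrite !eqxx orbT.
- have [-> ->] := Q y x u v Ey (negbT Ex) Eu (negbT Ev) ym xm um vm; by rewrite !eqxx orbT.
- have [-> ->] := Q y x v u Ey (negbT Ex) Ev (negbT Eu) ym xm vm um; by rewrite !eqxx.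
Qed.

End Main.

Section Count.
Variables (P L : finType) (inc : P -> L -> bool) (q : nat).
Hypothesis pp : is_proj_plane inc q.
Variables (s t : nat).
Hypotheses (s2 : 1 < s) (t2 : 1 < t).

Definition ks (k : nat) (X : {set P}) := [set A : {set P} | (A \subset X) && (#|A| == k)].

Definition Qset : {set (L * L) * ({set P} * {set P})} :=
  [set x | [&& x.1.1 != x.1.2, x.2.1 \in ks s (pts inc x.1.1 :\: pts inc x.1.2)
             & x.2.2 \in ks t (pts inc x.1.2 :\: pts inc x.1.1)]].

Lemma D_Q : Dset inc s t = [set x.2 | x in Qset].
Proof.
apply/setP => [[A B]]; rewrite inE /=; apply/idP/imsetP.
- move=> /and3P [hA hB /existsP [l1 /existsP [l2 /and3P [l12 HA HB]]]].
  by exists ((l1, l2), (A, B)); rewrite // inE /= !inE l12 HA HB hA hB.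
- move=> [[[l1 l2] [A' B']]]; rewrite inE /= !inE => /and3P [l12 /andP [HA hA] /andP [HB hB]] [-> ->].
  rewrite hA hB /=; apply/existsP; exists l1; apply/existsP; exists l2; by rewrite l12 HA HB.
Qed.

Lemma two_pts (A : {set P}) l l' : 1 < #|A| -> A \subset pts inc l -> A \subset pts inc l' -> l = l'.
Proof.
move=> /card_gt1P [a [b [aA bA ab]]] /subsetP H /subsetP H'.
move: (H a aA) (H b bA) (H' a aA) (H' b bA); rewrite !inE.
move=> h1 h2 h3 h4; exact: (line_uniq pp ab h1 h2 h3 h4).
Qed.

Lemma card_Q_D : #|Dset inc s t| = #|Qset|.
Proof.
rewrite D_Q; apply: card_in_imset => [[[l1 l2] [A B]]] [[l1' l2'] [A' B']].
rewrite !inE /= ?inE => /and3P [_ /andP [HA hA] /andP [HB hB]] /and3P [_ /andP [HA' _] /andP [HB' _]] /= E.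
case: E => EA EB; subst A' B'.
move/eqP: hA => hA; move/eqP: hB => hB.
have s1 : 1 < #|A| by rewrite hA.
have t1 : 1 < #|B| by rewrite hB.
have HA1 : A \subset pts inc l1 by apply: subset_trans HA (subsetDl _ _).
have HA1' : A \subset pts inc l1' by apply: subset_trans HA' (subsetDl _ _).
have HB1 : B \subset pts inc l2 by apply: subset_trans HB (subsetDl _ _).
have HB1' : B \subset pts inc l2' by apply: subset_trans HB' (subsetDl _ _).
by rewrite (two_pts s1 HA1 HA1') (two_pts t1 HB1 HB1').
Qed.

Lemma card_Q : #|Qset| = #|L| * #|L|.-1 * ('C(q, s) * 'C(q, t)).
Proof.
rewrite -sum1_card (partition_big (fun x => x.1) predT) //=.
rewrite (eq_bigr (fun p : L * L => if p.1 != p.2 then 'C(q, s) * 'C(q, t) else 0)); last first.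
  move=> [l1 l2] _; rewrite sum1dep_card /=.
  case: ifP => l12.
  - have -> : [set x | (x \in Qset) && (x.1 == (l1, l2))] =
       [set (l1, l2, AB) | AB in setX (ks s (pts inc l1 :\: pts inc l2)) (ks t (pts inc l2 :\: pts inc l1))].
      apply/setP => [[[m1 m2] [A B]]]; rewrite !inE /=; apply/idP/imsetP.
      + move=> /andP [H /eqP [E1 E2]]; subst m1 m2; move/and3P: H => [_ HA HB].
        by exists (A, B) => //; rewrite !inE /= HA HB.
      + move=> [[A' B']]; rewrite !inE /= => /andP [HA HB] [-> -> -> ->].
        by rewrite l12 HA HB !eqxx.
    rewrite card_imset; last by move=> x y [].
    have l21 : l2 != l1 by rewrite eq_sym l12.
    by rewrite cardsX !cards_draws (card_diff pp l21) (card_diff pp l12).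
  - apply/eqP; rewrite cards_eq0; apply/eqP/setP => [[[m1 m2] AB]]; rewrite !inE /=.
    apply/negP => /andP [/and3P [m12 _ _] /eqP [E1 E2]]; subst m1 m2.
    by rewrite l12 in m12.
rewrite -big_mkcond sum_nat_cond_const /=; congr (_ * _).
pose diag := [set (l, l) | l : L].
have cd : #|diag| = #|L| by rewrite card_imset // => x y [].
have Cd : ~: diag = [set p : L * L | p.1 != p.2].
  apply/setP => [[l1 l2]]; rewrite !inE /=; apply/negP/idP.
  - move=> H; apply/negP => /eqP E; subst l2; apply: H; exact: imset_f.
  - by move=> l12 /imsetP [l _ [E1 E2]]; subst; rewrite eqxx in l12.
have := cardsC diag; rewrite Cd cd card_prod.
rewrite -subn1 mulnBr muln1 => <-; rewrite addKn; apply: eq_card => x; by rewrite !inE.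
Qed.

End Count.

Section Sym.
Variables (P L : finType) (inc : P -> L -> bool).

Lemma sym_neq s t : s != t ->
  #|[set sym AB | AB in Dset inc s t]| = #|Dset inc s t|.
Proof.
move=> st; apply: card_in_imset => [[A B]] [C D].
rewrite !inE /= => /and3P [/eqP hA /eqP hB _] /and3P [/eqP hC /eqP hD _].
rewrite /sym /= => /setpair [[-> ->]|[E1 E2]] //.
by move: st; rewrite -hA -hD E1 eqxx.
Qed.

Lemma sym_eq s : 0 < s ->
  #|Dset inc s s| = 2 * #|[set sym AB | AB in Dset inc s s]|.
Proof.
move=> s0.
rewrite -sum1_card (partition_big_imset (@sym P)) /=.
rewrite (eq_bigr (fun _ => 2)); first by rewrite sum_nat_const mulnC.
move=> X /imsetP [[A B] dD ->].
have swap : (B, A) \in Dset inc s s.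
  move: dD; rewrite !inE /= => /and3P [-> -> /existsP [l1 /existsP [l2 /and3P [l12 HA HB]]]].
  apply/existsP; exists l2; apply/existsP; exists l1; by rewrite eq_sym l12 HA HB.
have AB : A != B.
  apply/eqP => E; subst B.
  move: dD; rewrite !inE /= => /and3P [/eqP hA _ /existsP [l1 /existsP [l2 /and3P [_ HA HB]]]].
  have : 0 < #|A| by rewrite hA.
  move=> /card_gt0P [a aA].
  move: (subsetP HA a aA) (subsetP HB a aA); rewrite !inE.
  by case/andP => /negP H1 _ /andP [_ H2].
rewrite sum1dep_card.
have -> : [set x | (x \in Dset inc s s) && (sym x == sym (A, B))] = [set (A, B); (B, A)].
  apply/setP => [[C D]]; rewrite !inE; apply/andP/orP.
  - move=> [_ /eqP]; rewrite /sym /= => /setpair [[-> ->]|[-> ->]]; [left|right]; exact: eqxx.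
  - have dD' := dD; have swap' := swap; rewrite !inE in dD' swap'.
    case=> /eqP [-> ->]; split => //; rewrite /sym /=.
    by rewrite setUC.
rewrite cards2.
have -> : (A, B) != (B, A) by apply/eqP => [[E _]]; rewrite E eqxx in AB.
by [].
Qed.

End Sym.

Theorem corollary4p6 (P L : finType) (inc : P -> L -> bool) (q n : nat) :
  is_proj_plane inc q -> q = (n + 1) ^ 2 ->
  (forall s t : nat, s <= q -> t <= q -> q - n < s -> q - n < t -> s <> t ->
     n_pi inc (Kst s t) = 2 * 'C(q ^ 2 + q + 1, 2) * 'C(q, s) * 'C(q, t)) /\
  (forall s : nat, s <= q -> q - n < s ->
     n_pi inc (Kst s s) = 'C(q ^ 2 + q + 1, 2) * 'C(q, s) ^ 2).
Proof.
move=> pp hq.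
have hq' : q = n * n + 2 * n + 1 by rewrite hq; nia.
have : 0 < #|L| by rewrite (card_lines pp); lia.
move=> /card_gt0P [l0 _].
have NN : #|L| * #|L|.-1 = 'C(q ^ 2 + q + 1, 2) * 2.
  by rewrite -(card_lines pp) bin_ffact ffactnS ffactn1.
have key : forall s t, s <= q -> t <= q -> q - n < s -> q - n < t ->
    n_pi inc (Kst s t) = #|[set sym AB | AB in Dset inc s t]|.
  move=> s t sq tq qs qt.
  have Hs1 : q.+1 <= s + n by lia.
  have Ht1 : q.+1 <= t + n by lia.
  have Hs2 : n * n.-1 < s.-1 by nia.
  have Ht2 : n * n.-1 < t.-1 by nia.
  rewrite /n_pi (@card_imset_equiv _ _ _ _ (@hf P s t) _ set0).
  - have -> : [set hf x | x in [set phi : {ffun ('I_s + 'I_t) -> P} | embedding inc (Kst s t) phi]]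
       = [set sym AB | AB in [set kf x | x in [set phi : {ffun ('I_s + 'I_t) -> P} | embedding inc (Kst s t) phi]]].
      by rewrite -imset_comp.
    have -> : [set kf x | x in [set phi : {ffun ('I_s + 'I_t) -> P} | embedding inc (Kst s t) phi]] = Dset inc s t.
      by apply/eqP; rewrite eqEsubset (kfE_sub pp l0 Hs1 Ht1 Hs2 Ht2) (kfE_sup pp s t).
    by [].
  - move=> x y; rewrite !inE => /andP [/injectiveP ix _] /andP [/injectiveP iy _].
    exact: class_eq.
split.
- move=> s t sq tq qs qt st.
  have s2 : 1 < s by nia.
  have t2 : 1 < t by nia.
  rewrite key // sym_neq; last by apply/eqP.
  rewrite (card_Q_D pp s2 t2) (card_Q pp) NN; nia.
- move=> s sq qs.
  have s2 : 1 < s by nia.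
  have := sym_eq inc (ltnW s2); rewrite (card_Q_D pp s2 s2) (card_Q pp) NN -key // => H.
  apply/eqP; rewrite -(eqn_pmul2l (isT : 0 < 2)) -H; apply/eqP; nia.
Qed.
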